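(* Let $\ell:X^N\to\mathbb R$ be Borel measurable. For $\alpha=(\alpha_\pi)_{\pi\in\mathcal S_N}$ in the simplex $\Delta^{\mathcal S_N}=\{\alpha\in[0,1]^{\mathcal S_N}:\sum_\pi\alpha_\pi=1\}$ let $F_\alpha(\ell)=\sum_{\pi\in\mathcal S_N}\alpha_\pi\,\ell\circ\pi$. Then $$\inf_{\alpha\in\Delta^{\mathcal S_N}}U(F_\alpha(\ell))=\min_{\alpha\in\Delta^{\mathcal S_N}}U(F_\alpha(\ell))=U(\ell_{\mathrm{sym}}),$$ i.e. the infimum is attained at the uniform weights $\alpha_\pi=1/N!$.
   Context: $X$ is a nonempty Polish space, $c$ a proper transportation cost (lower semi-continuous, symmetric, $c(x,x)=0$, weak triangle inequality $c(x,y)\le K(c(x,z)+c(z,y))$, compact sublevel sets $\{x:c(x_0,x)\le r\}$), $\hat P$ a Borel probability measure with $\int c(x_0,\cdot)d\hat P<\infty$, $\rho>0$, $N\in\mathbb N$. $c^N(x,y)=\sum_{i=1}^Nc(x_i,y_i)$ and $\mathbb B^{c^N}_{N\rho}(\hat P^{\otimes N})$ is the set of Borel probability measures $\bar P$ on $X^N$ with finite $c^N$-moment and $W_{c^N}(\bar P,\hat P^{\otimes N})\le N\rho$, where $W$ denotes the optimal transport cost. For Borel $g:X^N\to\mathbb R$, $U(g)=\sup_{\bar P\in\mathbb B^{c^N}_{N\rho}(\hat P^{\otimes N})}\mathbb E_{\bar P}g$ (possibly $+\infty$). $\mathcal S_N$ is the symmetric group, identified with coordinate permutations $\pi(x)=(x_{\pi(1)},\dots,x_{\pi(N)})$;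 $\ell_{\mathrm{sym}}(x)=\frac1{N!}\sum_{\pi\in\mathcal S_N}\ell(\pi(x))$. *)

(* Defs.v *)
From HB Require Import structures.
From mathcomp Require Import all_boot all_order all_algebra all_fingroup.
From mathcomp Require Import all_classical all_reals all_analysis.

Set Implicit Arguments.
Unset Strict Implicit.
Unset Printing Implicit Defensive.

Import Order.TTheory GRing.Theory Num.Theory.
Local Open Scope classical_set_scope.
Local Open Scope ring_scope.

Definition polish_space (R : realType) (T : topologicalType) : Prop :=
  (exists D : set T, countable D /\ dense D) /\
  exists dist : T -> T -> R,
    [/\ (forall x y, 0 <= dist x y),
        (forall x y, dist x y = 0 <-> x = y),
        (forall x y, dist x y = dist y x) &
        (forall x y z, dist x z <= dist x y + dist y z)] /\
    [/\
         (forall A : set T, open A <->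
           (forall x, A x -> exists2 e : R, 0 < e & [set y | dist x y < e] `<=` A)) &
        (forall u : nat -> T,
           (forall e : R, 0 < e -> exists M : nat, forall m n : nat,
               (M <= m)%N -> (M <= n)%N -> dist (u m) (u n) < e) ->
           exists x : T, forall e : R, 0 < e -> exists M : nat,
               forall n : nat, (M <= n)%N -> dist (u n) x < e)].

Definition Borel (T : ptopologicalType) := g_sigma_algebraType (@open T).

Definition proper_cost (R : realType) (T : topologicalType) (c : T -> T -> R) : Prop :=
  (forall x y, 0 <= c x y) /\
  [/\ @lower_semicontinuous (T * T)%type R (fun z => (c z.1 z.2)%:E),
      (forall x y, c x y = c y x),
      (forall x, c x x = 0),
      (exists K : R, forall x y z, c x y <= K * (c x z + c z y)) &
      (forall (x0 : T) (r : R), compact [set x | c x0 x <= r])].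

Definition costN (R : realType) (T : Type) (N : nat) (c : T -> T -> R)
  (x y : N.-tuple T) : R := \sum_(i < N) c (tnth x i) (tnth y i).

Definition ctuple (T : Type) (N : nat) (x0 : T) : N.-tuple T := [tuple x0 | i < N].

Local Open Scope ereal_scope.

Definition finite_moment d (S : measurableType d) (R : realType)
  (cc : S -> S -> R) (P : probability S R) : Prop :=
  exists x0 : S, \int[P]_y (cc x0 y)%:E < +oo.

Definition coupling d (S : measurableType d) (R : realType)
  (P Q : probability S R) (g : probability (S * S)%type R) : Prop :=
  forall A : set S, measurable A ->
    g (A `*` setT) = P A /\ g (setT `*` A) = Q A.

Definition OT_cost d (S : measurableType d) (R : realType)
  (cc : S -> S -> R) (P Q : probability S R) : \bar R :=
  ereal_inf [set \int[g]_z (cc z.1 z.2)%:E | g in coupling P Q].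

(* expectation of a Borel function g : S -> R, defined as
   E g = E g^+ - E g^-  with the convention  +oo - +oo = +oo *)
Definition expect_up d (S : measurableType d) (R : realType)
  (P : probability S R) (g : S -> R) : \bar R :=
  let p := \int[P]_x (Num.max (g x) 0%R)%:E in
  let n := \int[P]_x (Num.max (- g x)%R 0%R)%:E in
  if p == +oo then +oo else p - n.

Definition wball (R : realType) (T : ptopologicalType) (N : nat)
  (c : T -> T -> R) (rho : R) (PhatN : probability (N.-tuple (Borel T)) R)
  (Pbar : probability (N.-tuple (Borel T)) R) : Prop :=
  finite_moment (@costN R (Borel T) N c) Pbar /\
  OT_cost (@costN R (Borel T) N c) Pbar PhatN <= (N%:R * rho)%:E.

Definition Uwc (R : realType) (T : ptopologicalType) (N : nat)
  (c : T -> T -> R) (rho : R) (PhatN : probability (N.-tuple (Borel T)) R)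
  (g : N.-tuple (Borel T) -> R) : \bar R :=
  ereal_sup [set expect_up Pbar g | Pbar in wball c rho PhatN].

Local Close Scope ereal_scope.

Definition is_product_measure (R : realType) (T : ptopologicalType) (N : nat)
  (Phat : probability (Borel T) R) (PhatN : probability (N.-tuple (Borel T)) R) : Prop :=
  forall A : 'I_N -> set (Borel T), (forall i, measurable (A i)) ->
    PhatN [set x | forall i, A i (tnth x i)] = (\prod_(i < N) Phat (A i))%E.

Definition perm_tuple (T : Type) (N : nat) (s : 'S_N) (x : N.-tuple T) : N.-tuple T :=
  [tuple tnth x (s i) | i < N].

Definition simplex (R : realType) (N : nat) : set ('S_N -> R) :=
  [set a | (forall s, 0 <= a s <= 1) /\ \sum_(s : 'S_N) a s = 1].

Definition Falpha (R : realType) (T : Type) (N : nat) (a : 'S_N -> R)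
  (l : N.-tuple T -> R) : N.-tuple T -> R :=
  fun x => \sum_(s : 'S_N) a s * l (perm_tuple s x).

Definition lsym (R : realType) (T : Type) (N : nat) (l : N.-tuple T -> R) :
  N.-tuple T -> R :=
  fun x => (N`!%:R)^-1 * \sum_(s : 'S_N) l (perm_tuple s x).

Definition unif_weights (R : realType) (N : nat) : 'S_N -> R :=
  fun _ => (N`!%:R)^-1.

(* Main.v *)
Require Import Defs.
From HB Require Import structures.
From mathcomp Require Import all_boot all_order all_algebra all_fingroup.
From mathcomp Require Import all_classical all_reals all_analysis.
From mathcomp Require Import measurable_realfun.

Set Implicit Arguments.
Unset Strict Implicit.
Unset Printing Implicit Defensive.
Import Order.TTheory GRing.Theory Num.Theory.
Local Open Scope classical_set_scope.
Local Open Scope ring_scope.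
From mathcomp Require Import lra.
Section perm.
Context (T : Type) (N : nat).

Lemma perm_tupleE (s : 'S_N) (x : N.-tuple T) i :
  tnth (perm_tuple s x) i = tnth x (s i).
Proof. by rewrite tnth_mktuple. Qed.

Lemma perm_tupleM (s t : 'S_N) (x : N.-tuple T) :
  perm_tuple s (perm_tuple t x) = perm_tuple (s * t) x.
Proof. by apply: eq_from_tnth => i; rewrite !perm_tupleE permM. Qed.

Lemma perm_tuple1 (x : N.-tuple T) : perm_tuple 1 x = x.
Proof. by apply: eq_from_tnth => i; rewrite !perm_tupleE perm1. Qed.

Lemma perm_tupleK (s : 'S_N) : cancel (@perm_tuple T N s) (perm_tuple s^-1).
Proof. by move=> x; rewrite perm_tupleM mulVg perm_tuple1. Qed.

Lemma perm_tupleKV (s : 'S_N) : cancel (@perm_tuple T N s^-1) (perm_tuple s).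
Proof. by move=> x; rewrite perm_tupleM mulgV perm_tuple1. Qed.
End perm.

Lemma costN_perm (R : realType) (T : Type) N (c : T -> T -> R) (s : 'S_N) x y :
  costN c (perm_tuple s x) (perm_tuple s y) = costN c x y.
Proof.
rewrite /costN (reindex_inj (@perm_inj _ s^-1)) /=.
by apply: eq_bigr => i _; rewrite !perm_tupleE permKV.
Qed.

Section mperm.
Context d (T : measurableType d) (N : nat) (s : 'S_N).
Lemma measurable_perm_tuple : measurable_fun [set: N.-tuple T] (perm_tuple s).
Proof.
apply/measurable_fun_tnthP => i.
rewrite (_ : _ \o _ = (@tnth N T)^~ (s i)); first exact: measurable_tnth.
by apply: funext => x /=; rewrite perm_tupleE.
Qed.
HB.instance Definition _ := isMeasurableFun.Build _ _ _ _ (perm_tuple s)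
  measurable_perm_tuple.

Definition pperm (z : N.-tuple T * N.-tuple T) := (perm_tuple s z.1, perm_tuple s z.2).
Lemma measurable_pperm : measurable_fun setT pperm.
Proof.
apply/measurable_fun_pairP; split.
  exact: (measurableT_comp measurable_perm_tuple measurable_fst).
exact: (measurableT_comp measurable_perm_tuple measurable_snd).
Qed.
HB.instance Definition _ := isMeasurableFun.Build _ _ _ _ pperm measurable_pperm.
End mperm.

Section symm.
Local Open Scope ereal_scope.
Context d (X : measurableType d) (R : realType) (N : nat).
Variables (P : probability X R) (PN : probability (N.-tuple X) R).
Hypothesis prodP : forall A : 'I_N -> set X, (forall i, measurable (A i)) ->
    PN [set x | forall i, A i (tnth x i)] = \prod_(i < N) P (A i).

Let rect (A : 'I_N -> set X) := [set x : N.-tuple X | forall i, A i (tnth x i)].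
Let G := [set rect A | A in [set A : 'I_N -> set X | forall i, measurable (A i)]].

Let rect_measurable A : (forall i, measurable (A i)) -> measurable (rect A).
Proof.
move=> mA; rewrite (_ : rect A = \bigcap_(i in [set: 'I_N]) ((@tnth N X)^~ i @^-1` A i)).
  apply: fin_bigcap_measurable; first exact: finite_finset.
  move=> i _; rewrite -[X in measurable X]setTI; exact: measurable_tnth.
by apply/seteqP; split => x /= H i; [move=> _|]; apply: H.
Qed.

Let mG : (@measurable _ (N.-tuple X)) = <<s G >>.
Proof.
apply/seteqP; split.
  apply: smallest_sub; first exact: smallest_sigma_algebra.
  move=> A hA; apply: sub_gen_smallest.
  move: hA; rewrite -bigcup_seq => -[i _ [B mB <-]].
  exists (fun j => if j == i then B else setT).
    by move=> j /=; case: ifP.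
  apply/seteqP; split => x /=.
    by move=> H; split => //; have := H i; rewrite eqxx.
  by move=> [_ Bx] j; case: ifP => // /eqP ->.
apply: smallest_sub; first exact: sigma_algebra_measurable.
by move=> _ [A mA <-]; exact: rect_measurable.
Qed.

Let setIG : setI_closed G.
Proof.
move=> _ _ [A mA <-] [B mB <-]; exists (fun i => A i `&` B i).
  by move=> i; apply: measurableI; [exact: mA|exact: mB].
by apply/seteqP; split => x /=; [move=> H; split => i; case: (H i)|move=> [H1 H2] i; split].
Qed.

Lemma product_perm_invariant (s : 'S_N) B : measurable B ->
  distribution PN (perm_tuple s) B = PN B.
Proof.
move=> mB.
apply: (measure_unique G (fun _ => setT) mG setIG) => //.
- move=> _; exists (fun _ => setT) => //.
  by apply/seteqP; split => x.
- by apply/seteqP; split => x // _; exists 0%N.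
- move=> _ [A mA <-].
  change (PN (perm_tuple s @^-1` rect A) = PN (rect A)).
  have -> : perm_tuple s @^-1` rect A = rect (fun j => A ((s^-1)%g j)).
    apply/seteqP; split => x /= H i.
      by have := H ((s^-1)%g i); rewrite perm_tupleE permKV.
    by rewrite perm_tupleE; have := H (s i); rewrite permK.
  rewrite prodP; last by move=> i; exact: mA.
  rewrite prodP; last by move=> i; exact: mA.
  rewrite (reindex_inj (@perm_inj _ s)) /=.
  by apply: eq_bigr => i _; rewrite permK.
- move=> k; change (PN (perm_tuple s @^-1` setT) < +oo); by rewrite preimage_setT probability_setT ltry.
Qed.
End symm.
Import HBNNSimple.

Section compnn.
Context d (X : measurableType d) (R : realType).
Variables (h : {nnsfun X >-> R}) (phi : {mfun X >-> X}).
Definition hcomp := fun x => h (phi x).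
Let mc : measurable_fun [set: X] hcomp.
Proof. exact: (measurableT_comp (measurable_funPT h) (measurable_funPT phi)). Qed.
HB.instance Definition _ := isMeasurableFun.Build _ _ _ _ hcomp mc.
Let fin : finite_set (range hcomp).
Proof.
apply: (@sub_finite_set _ _ (range h)); last exact: fimfunP.
by move=> _ [x _ <-]; exists (phi x).
Qed.
HB.instance Definition _ := @FiniteImage.Build X R hcomp fin.
Let ge0 : forall x, (0 <= hcomp x)%R.
Proof. by move=> x; exact: fun_ge0. Qed.
HB.instance Definition _ := @isNonNegFun.Build X R hcomp ge0.
Definition comp_nnsfun : {nnsfun X >-> R} := hcomp.
End compnn.

Section iso.
Local Open Scope ereal_scope.
Context d (X : measurableType d) (R : realType) (mu : probability X R).
Variables (phi psi : {mfun X >-> X}).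
Hypotheses (K1 : cancel phi psi) (K2 : cancel psi phi).

Lemma ge0_integral_iso (f : X -> \bar R) : (forall x, 0 <= f x) ->
  \int[distribution mu phi]_x f x = \int[mu]_x f (phi x).
Proof.
move=> f0; rewrite !ge0_integralTE//; apply/eqP; rewrite eq_le; apply/andP; split.
- apply: ge_ereal_sup => _ [h /= hf <-].
  apply: ereal_sup_ubound => /=; exists (comp_nnsfun h phi) => //=.
  by move=> x; exact: hf.
- apply: ge_ereal_sup => _ [h /= hf <-].
  apply: ereal_sup_ubound => /=; exists (comp_nnsfun h psi) => /=.
    by move=> x; rewrite -{2}(K2 x); exact: hf.
  rewrite /distribution /pushforward /sintegral /=.
  apply: eq_fsbigr => r _; congr (_ * mu _).
  by apply: funext => x /=; rewrite /preimage /hcomp /= K1.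
Qed.
End iso.

Section ball.
Local Open Scope ereal_scope.
Context d (X : measurableType d) (R : realType) (N : nat).
Variables (cc : N.-tuple X -> N.-tuple X -> R) (PhatN : probability (N.-tuple X) R).
Hypothesis cc0 : forall x y, (0 <= cc x y)%R.
Hypothesis ccperm : forall (s : 'S_N) x y, cc (perm_tuple s x) (perm_tuple s y) = cc x y.
Hypothesis symm : forall (s : 'S_N) B, measurable B ->
  distribution PhatN (perm_tuple s) B = PhatN B.

Lemma finite_moment_perm (P : probability (N.-tuple X) R) (s : 'S_N) :
  finite_moment cc P -> finite_moment cc (distribution P (perm_tuple s)).
Proof.
move=> [x0 hx0]; exists (perm_tuple s x0).
rewrite (@ge0_integral_iso _ _ _ P (perm_tuple s) (perm_tuple (s^-1)%g)); last 3 first.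
- exact: perm_tupleK.
- exact: perm_tupleKV.
- by move=> y; rewrite lee_fin.
under eq_integral do rewrite ccperm.
exact: hx0.
Qed.

Lemma pperm_K (s : 'S_N) : cancel (@pperm _ X N s) (pperm (s^-1)%g).
Proof. by move=> [x y]; rewrite /pperm /= !perm_tupleK. Qed.
Lemma pperm_KV (s : 'S_N) : cancel (@pperm _ X N (s^-1)%g) (pperm s).
Proof. by move=> [x y]; rewrite /pperm /= !perm_tupleKV. Qed.

Lemma OT_cost_perm (P : probability (N.-tuple X) R) (s : 'S_N) :
  OT_cost cc (distribution P (perm_tuple s)) PhatN <= OT_cost cc P PhatN.
Proof.
apply: le_ereal_inf => _ [g gc <-].
exists (distribution g (pperm s)).
  move=> A mA.
  have mA' : measurable (perm_tuple s @^-1` A).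
    by rewrite -[X in measurable X]setTI; exact: measurable_perm_tuple.
  have [h1 h2] := gc _ mA'.
  split.
    change (g (pperm s @^-1` (A `*` setT)) = P (perm_tuple s @^-1` A)).
    by rewrite -h1; congr (g _); apply/seteqP; split => -[x y].
  change (g (pperm s @^-1` (setT `*` A)) = PhatN A).
  transitivity (PhatN (perm_tuple s @^-1` A)); last exact: (symm s mA).
  by rewrite -h2; congr (g _); apply/seteqP; split => -[x y].
rewrite (@ge0_integral_iso _ _ _ g (pperm s) (pperm (s^-1)%g)); last 3 first.
- exact: pperm_K.
- exact: pperm_KV.
- by move=> y; rewrite lee_fin.
by apply: eq_integral => -[x y] _ /=; rewrite ccperm.
Qed.
End ball.
Lemma maxB0 (R : realType) (a : R) : Num.max a 0 = Num.max (- a) 0 + a.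
Proof.
rewrite !maxEle; case: ifPn => H1; case: ifPn => H2; rewrite ?real_ltNge -?ltNge in H1 H2 *; try lra.
Qed.

Section avg.
Local Open Scope ereal_scope.
Context d (Y : measurableType d) (R : realType) (P : probability Y R).
Variables (I : finType) (w : R) (f : I -> Y -> R).
Hypotheses (mf : forall i, measurable_fun setT (f i)) (w0 : (0 < w)%R)
  (w1 : (w * #|I|%:R = 1)%R).
Variable M : \bar R.
Hypothesis hM : forall i, expect_up P (f i) <= M.

Let pos (g : Y -> R) := \int[P]_x (Num.max (g x) 0)%:E.
Let neg (g : Y -> R) := \int[P]_x (Num.max (- g x) 0)%:E.
Let expE g : expect_up P g = if pos g == +oo then +oo else pos g - neg g.
Proof. by []. Qed.
Let pos_ge0 g : 0 <= pos g. Proof. by apply: integral_ge0 => x _; rewrite lee_fin le_max lexx orbT. Qed.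
Let neg_ge0 g : 0 <= neg g. Proof. by apply: integral_ge0 => x _; rewrite lee_fin le_max lexx orbT. Qed.
Let mpos (g : Y -> R) : measurable_fun setT g -> measurable_fun setT (fun x => (Num.max (g x) 0)%:E).
Proof. by move=> mg; apply/measurable_EFinP; exact: (measurable_funrpos mg). Qed.
Let mneg (g : Y -> R) : measurable_fun setT g -> measurable_fun setT (fun x => (Num.max (- g x) 0)%:E).
Proof. by move=> mg; apply/measurable_EFinP; exact: (measurable_funrneg mg). Qed.

Lemma expect_avg : expect_up P (fun x => w * \sum_i f i x)%R <= M.
Proof.
set h := fun x => _.
have mh : measurable_fun setT h.
  apply: measurable_funM => //; exact: measurable_sum.
have [[i hi]|hfin] := pselect (exists i, pos (f i) = +oo).
  have := hM i; rewrite expE hi eqxx leye_eq => /eqP ->; exact: leey.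
have pfin i : pos (f i) \is a fin_num.
  rewrite ge0_fin_numE// ltey; apply/eqP => H; apply: hfin; by exists i.
pose p i := fine (pos (f i)).
have pE i : pos (f i) = (p i)%:E by rewrite /p fineK.
have key : pos h + \sum_i w%:E * neg (f i) = neg h + \sum_i w%:E * pos (f i).
  have E1 : forall (a : Y -> R) (b : I -> Y -> R), measurable_fun setT a ->
      (forall i, measurable_fun setT (b i)) ->
      \int[P]_x (Num.max (a x) 0)%:E + \sum_i w%:E * \int[P]_x (Num.max (b i x) 0)%:E
      = \int[P]_x ((Num.max (a x) 0)%:E + \sum_i w%:E * (Num.max (b i x) 0)%:E).
    move=> a b ma mb.
    have a0 : forall x, [set: Y] x -> 0 <= (Num.max (a x) 0)%:E.
      by move=> x _; rewrite lee_fin le_max lexx orbT.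
    have bi0 : forall i x, [set: Y] x -> 0 <= w%:E * (Num.max (b i x) 0)%:E.
      by move=> i x _; rewrite -EFinM lee_fin; apply: mulr_ge0; [exact: ltW|rewrite le_max lexx orbT].
    have b0 : forall x, [set: Y] x -> 0 <= \sum_i w%:E * (Num.max (b i x) 0)%:E.
      by move=> x _; apply: sume_ge0 => i _; exact: bi0.
    have mbi : forall i, measurable_fun setT (fun x => w%:E * (Num.max (b i x) 0)%:E).
      move=> i; apply: measurable_funeM; exact: mpos.
    have mb' : measurable_fun setT (fun x => \sum_i w%:E * (Num.max (b i x) 0)%:E).
      rewrite (_ : (fun x => _) = (fun x => (\sum_i (w * Num.max (b i x) 0))%:E)%R); last first.
        by apply: funext => x; rewrite -sumEFin; apply: eq_bigr => i _; rewrite EFinM.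
      apply/measurable_EFinP; apply: measurable_sum => i.
      apply: measurable_funM => //; exact: measurable_funrpos.
    rewrite (ge0_integralD P measurableT a0 (mpos ma) b0 mb').
    congr (_ + _); rewrite (ge0_integral_sum P measurableT mbi bi0).
    apply: eq_bigr => i _; rewrite ge0_integralZl//.
    - exact: mpos.
    - by move=> x _; rewrite lee_fin le_max lexx orbT.
    - by rewrite lee_fin ltW.
  rewrite /pos /neg.
  rewrite (E1 h (fun i x => (- f i x)%R)); last 2 first.
  - exact: mh.
  - by move=> i; apply: measurable_funN.
  rewrite (E1 (fun x => (- h x)%R) f); last 2 first.
  - by apply: measurable_funN.
  - exact: mf.
  apply: eq_integral => x _.
  under eq_bigr do rewrite -EFinM.
  under [in RHS]eq_bigr do rewrite -EFinM.
  rewrite !sumEFin -!EFinD; congr (_%:E).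
  rewrite (maxB0 (h x)).
  under [in RHS]eq_bigr do rewrite (maxB0 (f _ x)) mulrDr.
  rewrite big_split /= /h mulr_sumr; lra.
have ID_E : \sum_i w%:E * pos (f i) = (\sum_i (w * p i))%:E.
  by rewrite -sumEFin; apply: eq_bigr => i _; rewrite pE EFinM.
have hposle : pos h <= \sum_i w%:E * pos (f i).
  have E2 : \int[P]_x (\sum_i w%:E * (Num.max (f i x) 0)%:E) = \sum_i w%:E * pos (f i).
    have bi0 : forall i x, [set: Y] x -> 0 <= w%:E * (Num.max (f i x) 0)%:E.
      by move=> i x _; rewrite -EFinM lee_fin; apply: mulr_ge0; [exact: ltW|rewrite le_max lexx orbT].
    have mbi : forall i, measurable_fun setT (fun x => w%:E * (Num.max (f i x) 0)%:E).
      move=> i; apply: measurable_funeM; exact: mpos.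
    rewrite (ge0_integral_sum P measurableT mbi bi0).
    apply: eq_bigr => i _; rewrite ge0_integralZl//.
    - exact: mpos.
    - by move=> x _; rewrite lee_fin le_max lexx orbT.
    - by rewrite lee_fin ltW.
  rewrite -E2; apply: ge0_le_integral => //.
  - by move=> x _; rewrite lee_fin le_max lexx orbT.
  - exact: mpos.
  - rewrite (_ : (fun x => _) = (fun x => (\sum_i (w * Num.max (f i x) 0))%:E)%R); last first.
      by apply: funext => x; rewrite -sumEFin; apply: eq_bigr => i _; rewrite EFinM.
    apply/measurable_EFinP; apply: measurable_sum => i.
    apply: measurable_funM => //; exact: measurable_funrpos.
  - move=> x _.
    under eq_bigr do rewrite -EFinM.
    rewrite sumEFin lee_fin ge_max; apply/andP; split.
      rewrite /h mulr_sumr; apply: ler_sum => i _; apply: ler_wpM2l; first exact: ltW.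
      by rewrite le_max lexx.
    by apply: sumr_ge0 => i _; apply: mulr_ge0; [exact: ltW|rewrite le_max lexx orbT].
have hfinp : pos h \is a fin_num.
  by rewrite ge0_fin_numE//; apply: (le_lt_trans hposle); rewrite ID_E ltry.
rewrite expE.
have /andP[_ /negbTE ->] : (pos h != -oo) && (pos h != +oo) by rewrite -fin_numE.
have [nhfin|nhinf] := boolP (neg h \is a fin_num); last first.
  have -> : neg h = +oo by move: nhinf; rewrite ge0_fin_numE// ltey negbK => /eqP.
  by rewrite -(fineK hfinp) addeNy leNye.
have IBfin : \sum_i w%:E * neg (f i) \is a fin_num.
  have : pos h + \sum_i w%:E * neg (f i) \is a fin_num.
    by rewrite key fin_numD nhfin ID_E.
  by rewrite fin_numD => /andP[].
have nfin j : neg (f j) \is a fin_num.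
  have hle : w%:E * neg (f j) <= \sum_i w%:E * neg (f i).
    rewrite (bigD1 j) //=; apply: leeDl; apply: sume_ge0 => i _; apply: mule_ge0 => //.
    by rewrite lee_fin ltW.
  have := neg_ge0 (f j); move: hle.
  case: (neg (f j)) => [r| |] //= hle _.
  move: IBfin; rewrite ge0_fin_numE; last by apply: sume_ge0 => i _; apply: mule_ge0 => //; rewrite lee_fin ltW.
  by rewrite mulry gtr0_sg// mul1e in hle; rewrite ltNge (le_trans _ hle)// leey.
pose m i := fine (neg (f i)).
have mE i : neg (f i) = (m i)%:E by rewrite /m fineK.
have keyR : (fine (pos h) + \sum_i (w * m i) = fine (neg h) + \sum_i (w * p i))%R.
  apply: EFin_inj; rewrite !EFinD fineK// fineK// -ID_E -key; congr (_ + _).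
  by rewrite -sumEFin; apply: eq_bigr => i _; rewrite mE EFinM.
have hMi i : ((p i - m i)%:E <= M).
  by have := hM i; rewrite expE pE /= mE EFinB.
have Igt0 : (0 < #|I|)%N.
  rewrite lt0n; apply/eqP => H; move: w1; rewrite H mulr0 => /eqP; by rewrite eq_sym oner_eq0.
rewrite -(fineK hfinp) -(fineK nhfin) -EFinB.
case EM: M hMi => [r| |] hMi; last 2 first.
- exact: leey.
- by case/card_gt0P: Igt0 => i _; have := hMi i.
rewrite lee_fin.
have -> : (fine (pos h) - fine (neg h) = \sum_i (w * (p i - m i)))%R.
  under eq_bigr do rewrite mulrBr.
  rewrite sumrB; lra.
apply: (@le_trans _ _ (\sum_i (w * r))%R).
  apply: ler_sum => i _; apply: ler_wpM2l; first exact: ltW.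
  by rewrite -lee_fin.
by rewrite sumr_const -mulr_natr mulrAC w1 mul1r.
Qed.
End avg.

Section expect_perm.
Local Open Scope ereal_scope.
Context d (X : measurableType d) (R : realType) (N : nat).
Lemma expect_perm (P : probability (N.-tuple X) R) (s : 'S_N) (g : N.-tuple X -> R) :
  expect_up (distribution P (perm_tuple s)) g = expect_up P (fun x => g (perm_tuple s x)).
Proof.
rewrite /expect_up.
rewrite (@ge0_integral_iso _ _ _ P (perm_tuple s) (perm_tuple (s^-1)%g)); last 3 first.
- exact: perm_tupleK.
- exact: perm_tupleKV.
- by move=> y; rewrite lee_fin le_max lexx orbT.
rewrite (@ge0_integral_iso _ _ _ P (perm_tuple s) (perm_tuple (s^-1)%g)); last 3 first.
- exact: perm_tupleK.
- exact: perm_tupleKV.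
- by move=> y; rewrite lee_fin le_max lexx orbT.
by [].
Qed.
End expect_perm.

Theorem mainTheorem6 (R : realType) (T : ptopologicalType) (c : T -> T -> R)
  (Phat : probability (Borel T) R) (rho : R) (N : nat)
  (PhatN : probability (N.-tuple (Borel T)) R)
  (l : N.-tuple (Borel T) -> R) :
  polish_space R T ->
  proper_cost c ->
  (exists x0 : Borel T, (\int[Phat]_y (c x0 y)%:E < +oo)%E) ->
  0 < rho ->
  is_product_measure Phat PhatN ->
  measurable_fun setT l ->
  let S := [set Uwc c rho PhatN (Falpha a l) | a in @simplex R N] in
  [/\ ereal_inf S = Uwc c rho PhatN (lsym l),
      S (ereal_inf S) &
      @simplex R N (@unif_weights R N) /\
      Uwc c rho PhatN (Falpha (@unif_weights R N) l) = ereal_inf S].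
Proof.
move=> _ [c0 _] _ _ hprod ml S.
have cc0 : forall x y, 0 <= @costN R (Borel T) N c x y.
  by move=> x y; apply: sumr_ge0 => i _; exact: c0.
have symm := product_perm_invariant hprod.
have Fmeas : forall a, measurable_fun setT (Falpha a l).
  move=> a; apply: measurable_sum => s; apply: measurable_funM => //.
  exact: (measurableT_comp ml (measurable_perm_tuple s)).
have w0 : (0 : R) < (N`!%:R)^-1 by rewrite invr_gt0 ltr0n fact_gt0.
have w1 : (N`!%:R)^-1 * #|'S_N|%:R = 1 :> R.
  by rewrite card_Sn mulVf // pnatr_eq0 -lt0n fact_gt0.
have main : forall a, simplex a -> (Uwc c rho PhatN (lsym l) <= Uwc c rho PhatN (Falpha a l))%E.
  move=> a [a01 asum]; apply: ub_ereal_sup => _ [Pb hPb <-].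
  have -> : lsym l = fun x => (N`!%:R)^-1 * \sum_(s : 'S_N) Falpha a l (perm_tuple s x).
    apply: funext => x; rewrite /lsym; congr (_ * _).
    transitivity (\sum_(t : 'S_N) a t * \sum_(s : 'S_N) l (perm_tuple s x)).
      by rewrite -mulr_suml asum mul1r.
    rewrite /Falpha exchange_big /=; apply: eq_bigr => t _; rewrite mulr_sumr.
    rewrite (reindex_inj (mulgI t)) /=; apply: eq_bigr => s _.
    by rewrite perm_tupleM.
  apply: (@expect_avg _ _ _ Pb 'S_N ((N`!%:R)^-1) (fun s x => Falpha a l (perm_tuple s x))) => //.
    by move=> s; exact: (measurableT_comp (Fmeas a) (measurable_perm_tuple s)).
  move=> s /=; rewrite -expect_perm; apply: ereal_sup_ubound; exists (distribution Pb (perm_tuple s)) => //.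
  have ccp : forall (t : 'S_N) x y, @costN R (Borel T) N c (perm_tuple t x) (perm_tuple t y) = costN c x y.
    by move=> t x y; exact: costN_perm.
  case: hPb => hm hot; split.
    exact: (finite_moment_perm cc0 ccp).
  apply: le_trans hot; exact: (OT_cost_perm cc0 ccp symm).
have unif_simp : simplex (@unif_weights R N).
  split.
    by move=> s; rewrite /unif_weights ltW // invf_le1 // ler1n fact_gt0.
  rewrite /unif_weights sumr_const.
  have -> : #|[pred _ : 'S_N | true]| = N`! by rewrite -card_Sn; apply: eq_card.
  by rewrite -(mulr_natl (N`!%:R^-1) N`!) mulfV // pnatr_eq0 -lt0n fact_gt0.
have Funif : Falpha (@unif_weights R N) l = lsym l.
  by apply: funext => x; rewrite /Falpha /lsym mulr_sumr.
have lsymS : S (Uwc c rho PhatN (lsym l)).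
  by exists (@unif_weights R N) => //; rewrite Funif.
have infE : ereal_inf S = Uwc c rho PhatN (lsym l).
  apply/eqP; rewrite eq_le; apply/andP; split.
    exact: (ereal_inf_lbound lsymS).
  by apply: le_ereal_inf_tmp => _ [a ha <-]; exact: main.
split => //; first by rewrite infE.
by rewrite Funif infE.
Qed.
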